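(* For finite $W\subset\mathbb{Z}^2$ let $D(W)$ denote the set of integer points in the Euclidean convex hull of $W$. Let $D_1=D(\{(-3,0),(0,3),(1,2),(-2,-1)\})$, $D_2=D(\{(1,2),(3,0),(2,-1),(0,1)\})$, $D_3=D(\{(2,-1),(0,-3),(-1,-2),(1,0)\})$, $D_4=D(\{(-1,-2),(-2,-1),(-1,0),(0,-1)\})$, $D_5=D(\{(5,0),(7,2),(8,1),(6,-1)\})$, $D_6=D(\{(7,2),(8,3),(9,2),(9,0)\})$, $D_7=D(\{(9,0),(9,-2),(8,-3),(7,-2)\})$, $D_8=D(\{(7,-2),(6,-1),(7,0),(8,-1)\})$, and let $X=\{(4,0)\}\cup\bigcup_{i=1}^8 D_i$. Then $$B'=\{(-3,0),(0,-3),(0,3),(8,-3),(8,3),(9,-2),(9,-1),(9,1),(9,2)\}$$ is a minimal freezing set for $(X,c_2)$.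
   Context: For $x\neq y$ in $\mathbb{Z}^2$, $x,y$ are $c_2$-adjacent if each coordinate differs by at most 1. $f:X\to X$ is $c_2$-continuous ($f\in C(X,c_2)$) if whenever $x,x'$ are $c_2$-adjacent, $f(x)$ and $f(x')$ are equal or $c_2$-adjacent. $\mathrm{Fix}(f)=\{x:f(x)=x\}$. $A\subset X$ is a freezing set for $(X,c_2)$ if every $f\in C(X,c_2)$ with $A\subset\mathrm{Fix}(f)$ is the identity on $X$; it is minimal if no proper subset of $A$ is a freezing set. *)

(* Defs.v *)
From Stdlib Require Import Reals ZArith List.
Import ListNotations.
Open Scope Z_scope.

Definition pt : Type := (Z * Z)%type.

Definition c2_adj (x y : pt) : Prop :=
  x <> y /\ Z.abs (fst x - fst y) <= 1 /\ Z.abs (snd x - snd y) <= 1.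

(* f : X -> X (encoded as f : pt -> pt mapping X into X; values off X are
   irrelevant) that is c_2-continuous. *)
Definition c2_continuous (X : pt -> Prop) (f : pt -> pt) : Prop :=
  (forall x, X x -> X (f x)) /\
  (forall x y, X x -> X y -> c2_adj x y -> f x = f y \/ c2_adj (f x) (f y)).

Definition freezing_set (X A : pt -> Prop) : Prop :=
  (forall a, A a -> X a) /\
  (forall f, c2_continuous X f -> (forall a, A a -> f a = a) ->
     forall x, X x -> f x = x).

Definition minimal_freezing_set (X A : pt -> Prop) : Prop :=
  freezing_set X A /\
  (forall A' : pt -> Prop, (forall a, A' a -> A a) -> (exists a, A a /\ ~ A' a) ->
     ~ freezing_set X A').

Definition in_conv_hull (W : list pt) (p : pt) : Prop :=
  exists c : nat -> R,
    (forall i, (i < length W)%nat -> (0 <= c i)%R) /\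
    fold_right Rplus 0%R (map c (seq 0 (length W))) = 1%R /\
    fold_right Rplus 0%R
      (map (fun i => (c i * IZR (fst (nth i W (0%Z, 0%Z))))%R) (seq 0 (length W)))
      = IZR (fst p) /\
    fold_right Rplus 0%R
      (map (fun i => (c i * IZR (snd (nth i W (0%Z, 0%Z))))%R) (seq 0 (length W)))
      = IZR (snd p).

Definition D (W : list pt) : pt -> Prop := fun p => in_conv_hull W p.

Definition D1 := D [(-3, 0); (0, 3); (1, 2); (-2, -1)].
Definition D2 := D [(1, 2); (3, 0); (2, -1); (0, 1)].
Definition D3 := D [(2, -1); (0, -3); (-1, -2); (1, 0)].
Definition D4 := D [(-1, -2); (-2, -1); (-1, 0); (0, -1)].
Definition D5 := D [(5, 0); (7, 2); (8, 1); (6, -1)].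
Definition D6 := D [(7, 2); (8, 3); (9, 2); (9, 0)].
Definition D7 := D [(9, 0); (9, -2); (8, -3); (7, -2)].
Definition D8 := D [(7, -2); (6, -1); (7, 0); (8, -1)].

Definition X6 : pt -> Prop := fun p =>
  p = (4, 0) \/ D1 p \/ D2 p \/ D3 p \/ D4 p \/ D5 p \/ D6 p \/ D7 p \/ D8 p.

Definition B' : pt -> Prop := fun p =>
  In p [(-3, 0); (0, -3); (0, 3); (8, -3); (8, 3); (9, -2); (9, -1); (9, 1); (9, 2)].

(* Main.v *)
Require Import Defs.
From Stdlib Require Import Reals ZArith List Lra Lia Bool.
Import ListNotations.
Open Scope Z_scope.

Definition Xl : list pt := [(-3,0); (-2,-1); (-2,0); (-2,1); (-1,-2); (-1,-1); (-1,0); (-1,1); (-1,2); (0,-3); (0,-2); (0,-1); (0,1); (0,2); (0,3); (1,-2); (1,-1); (1,0); (1,1); (1,2); (2,-1); (2,0); (2,1); (3,0); (4,0); (5,0); (6,-1); (6,0); (6,1); (7,-2); (7,-1); (7,0); (7,1); (7,2); (8,-3); (8,-2); (8,-1); (8,1); (8,2); (8,3); (9,-2); (9,-1); (9,0); (9,1); (9,2)].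
Definition pteqb (a b : pt) : bool := Z.eqb (fst a) (fst b) && Z.eqb (snd a) (snd b).
Lemma pteqb_iff a b : pteqb a b = true <-> a = b.
Proof. destruct a as [a1 a2], b as [b1 b2]; unfold pteqb; simpl.
rewrite andb_true_iff, !Z.eqb_eq. split; [intros [-> ->]; auto | intros H; inversion H; auto]. Qed.
Lemma pteqb_refl a : pteqb a a = true.
Proof. apply pteqb_iff; auto. Qed.
Definition inb (p : pt) (L : list pt) := existsb (pteqb p) L.
Lemma inb_iff p L : inb p L = true <-> In p L.
Proof. unfold inb. rewrite existsb_exists. split.
- intros [q [Hq E]]. apply pteqb_iff in E. subst. auto.
- intros H. exists p. split; auto. apply pteqb_iff; auto. Qed.
Lemma inb_In p : inb p Xl = true -> In p Xl. Proof. apply inb_iff. Qed.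

Ltac split_or H := match type of H with _ \/ _ => destruct H as [H|H]; [subst | split_or H] | _ => subst end.
Ltac split_or_in H := simpl in H; repeat (destruct H as [<-|H]).
Ltac hullsolve := cbn [fold_right map seq length nth fst snd];
  repeat split; [intros i _; destruct i as [|[|[|]]]; lra | lra..].

Lemma D1_sub x y : D1 (x,y) -> In (x,y) Xl.
Proof.
unfold D1, D, in_conv_hull. intros (c & Hc & H1 & H2 & H3).
cbn [fold_right map seq length nth fst snd] in *.
assert (A0 := Hc 0%nat ltac:(lia)). assert (A1 := Hc 1%nat ltac:(lia)). assert (A2 := Hc 2%nat ltac:(lia)). assert (A3 := Hc 3%nat ltac:(lia)).
assert (E0 : (0 <= (3)*x + (-3)*y + (9))%Z) by (apply le_IZR; rewrite !plus_IZR, !mult_IZR; lra).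
assert (E1 : (0 <= (-1)*x + (-1)*y + (3))%Z) by (apply le_IZR; rewrite !plus_IZR, !mult_IZR; lra).
assert (E2 : (0 <= (-3)*x + (3)*y + (-3))%Z) by (apply le_IZR; rewrite !plus_IZR, !mult_IZR; lra).
assert (E3 : (0 <= (1)*x + (1)*y + (3))%Z) by (apply le_IZR; rewrite !plus_IZR, !mult_IZR; lra).
assert (Hx : x = (-3) \/ x = (-2) \/ x = (-1) \/ x = (0) \/ x = (1)) by lia.
assert (Hy : y = (-1) \/ y = (0) \/ y = (1) \/ y = (2) \/ y = (3)) by lia.
split_or Hx; split_or Hy; first [exfalso; lia | apply inb_In; reflexivity].
Qed.

Lemma D2_sub x y : D2 (x,y) -> In (x,y) Xl.
Proof.
unfold D2, D, in_conv_hull. intros (c & Hc & H1 & H2 & H3).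
cbn [fold_right map seq length nth fst snd] in *.
assert (A0 := Hc 0%nat ltac:(lia)). assert (A1 := Hc 1%nat ltac:(lia)). assert (A2 := Hc 2%nat ltac:(lia)). assert (A3 := Hc 3%nat ltac:(lia)).
assert (E0 : (0 <= (-2)*x + (-2)*y + (6))%Z) by (apply le_IZR; rewrite !plus_IZR, !mult_IZR; lra).
assert (E1 : (0 <= (-1)*x + (1)*y + (3))%Z) by (apply le_IZR; rewrite !plus_IZR, !mult_IZR; lra).
assert (E2 : (0 <= (2)*x + (2)*y + (-2))%Z) by (apply le_IZR; rewrite !plus_IZR, !mult_IZR; lra).
assert (E3 : (0 <= (1)*x + (-1)*y + (1))%Z) by (apply le_IZR; rewrite !plus_IZR, !mult_IZR; lra).
assert (Hx : x = (0) \/ x = (1) \/ x = (2) \/ x = (3)) by lia.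
assert (Hy : y = (-1) \/ y = (0) \/ y = (1) \/ y = (2)) by lia.
split_or Hx; split_or Hy; first [exfalso; lia | apply inb_In; reflexivity].
Qed.

Lemma D3_sub x y : D3 (x,y) -> In (x,y) Xl.
Proof.
unfold D3, D, in_conv_hull. intros (c & Hc & H1 & H2 & H3).
cbn [fold_right map seq length nth fst snd] in *.
assert (A0 := Hc 0%nat ltac:(lia)). assert (A1 := Hc 1%nat ltac:(lia)). assert (A2 := Hc 2%nat ltac:(lia)). assert (A3 := Hc 3%nat ltac:(lia)).
assert (E0 : (0 <= (-2)*x + (2)*y + (6))%Z) by (apply le_IZR; rewrite !plus_IZR, !mult_IZR; lra).
assert (E1 : (0 <= (1)*x + (1)*y + (3))%Z) by (apply le_IZR; rewrite !plus_IZR, !mult_IZR; lra).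
assert (E2 : (0 <= (2)*x + (-2)*y + (-2))%Z) by (apply le_IZR; rewrite !plus_IZR, !mult_IZR; lra).
assert (E3 : (0 <= (-1)*x + (-1)*y + (1))%Z) by (apply le_IZR; rewrite !plus_IZR, !mult_IZR; lra).
assert (Hx : x = (-1) \/ x = (0) \/ x = (1) \/ x = (2)) by lia.
assert (Hy : y = (-3) \/ y = (-2) \/ y = (-1) \/ y = (0)) by lia.
split_or Hx; split_or Hy; first [exfalso; lia | apply inb_In; reflexivity].
Qed.

Lemma D4_sub x y : D4 (x,y) -> In (x,y) Xl.
Proof.
unfold D4, D, in_conv_hull. intros (c & Hc & H1 & H2 & H3).
cbn [fold_right map seq length nth fst snd] in *.
assert (A0 := Hc 0%nat ltac:(lia)). assert (A1 := Hc 1%nat ltac:(lia)). assert (A2 := Hc 2%nat ltac:(lia)). assert (A3 := Hc 3%nat ltac:(lia)).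
assert (E0 : (0 <= (1)*x + (1)*y + (3))%Z) by (apply le_IZR; rewrite !plus_IZR, !mult_IZR; lra).
assert (E1 : (0 <= (1)*x + (-1)*y + (1))%Z) by (apply le_IZR; rewrite !plus_IZR, !mult_IZR; lra).
assert (E2 : (0 <= (-1)*x + (-1)*y + (-1))%Z) by (apply le_IZR; rewrite !plus_IZR, !mult_IZR; lra).
assert (E3 : (0 <= (-1)*x + (1)*y + (1))%Z) by (apply le_IZR; rewrite !plus_IZR, !mult_IZR; lra).
assert (Hx : x = (-2) \/ x = (-1) \/ x = (0)) by lia.
assert (Hy : y = (-2) \/ y = (-1) \/ y = (0)) by lia.
split_or Hx; split_or Hy; first [exfalso; lia | apply inb_In; reflexivity].
Qed.

Lemma D5_sub x y : D5 (x,y) -> In (x,y) Xl.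
Proof.
unfold D5, D, in_conv_hull. intros (c & Hc & H1 & H2 & H3).
cbn [fold_right map seq length nth fst snd] in *.
assert (A0 := Hc 0%nat ltac:(lia)). assert (A1 := Hc 1%nat ltac:(lia)). assert (A2 := Hc 2%nat ltac:(lia)). assert (A3 := Hc 3%nat ltac:(lia)).
assert (E0 : (0 <= (2)*x + (-2)*y + (-10))%Z) by (apply le_IZR; rewrite !plus_IZR, !mult_IZR; lra).
assert (E1 : (0 <= (-1)*x + (-1)*y + (9))%Z) by (apply le_IZR; rewrite !plus_IZR, !mult_IZR; lra).
assert (E2 : (0 <= (-2)*x + (2)*y + (14))%Z) by (apply le_IZR; rewrite !plus_IZR, !mult_IZR; lra).
assert (E3 : (0 <= (1)*x + (1)*y + (-5))%Z) by (apply le_IZR; rewrite !plus_IZR, !mult_IZR; lra).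
assert (Hx : x = (5) \/ x = (6) \/ x = (7) \/ x = (8)) by lia.
assert (Hy : y = (-1) \/ y = (0) \/ y = (1) \/ y = (2)) by lia.
split_or Hx; split_or Hy; first [exfalso; lia | apply inb_In; reflexivity].
Qed.

Lemma D6_sub x y : D6 (x,y) -> In (x,y) Xl.
Proof.
unfold D6, D, in_conv_hull. intros (c & Hc & H1 & H2 & H3).
cbn [fold_right map seq length nth fst snd] in *.
assert (A0 := Hc 0%nat ltac:(lia)). assert (A1 := Hc 1%nat ltac:(lia)). assert (A2 := Hc 2%nat ltac:(lia)). assert (A3 := Hc 3%nat ltac:(lia)).
assert (E0 : (0 <= (1)*x + (-1)*y + (-5))%Z) by (apply le_IZR; rewrite !plus_IZR, !mult_IZR; lra).
assert (E1 : (0 <= (-1)*x + (-1)*y + (11))%Z) by (apply le_IZR; rewrite !plus_IZR, !mult_IZR; lra).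
assert (E2 : (0 <= (-2)*x + (0)*y + (18))%Z) by (apply le_IZR; rewrite !plus_IZR, !mult_IZR; lra).
assert (E3 : (0 <= (2)*x + (2)*y + (-18))%Z) by (apply le_IZR; rewrite !plus_IZR, !mult_IZR; lra).
assert (Hx : x = (7) \/ x = (8) \/ x = (9)) by lia.
assert (Hy : y = (0) \/ y = (1) \/ y = (2) \/ y = (3)) by lia.
split_or Hx; split_or Hy; first [exfalso; lia | apply inb_In; reflexivity].
Qed.

Lemma D7_sub x y : D7 (x,y) -> In (x,y) Xl.
Proof.
unfold D7, D, in_conv_hull. intros (c & Hc & H1 & H2 & H3).
cbn [fold_right map seq length nth fst snd] in *.
assert (A0 := Hc 0%nat ltac:(lia)). assert (A1 := Hc 1%nat ltac:(lia)). assert (A2 := Hc 2%nat ltac:(lia)). assert (A3 := Hc 3%nat ltac:(lia)).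
assert (E0 : (0 <= (-2)*x + (0)*y + (18))%Z) by (apply le_IZR; rewrite !plus_IZR, !mult_IZR; lra).
assert (E1 : (0 <= (-1)*x + (1)*y + (11))%Z) by (apply le_IZR; rewrite !plus_IZR, !mult_IZR; lra).
assert (E2 : (0 <= (1)*x + (1)*y + (-5))%Z) by (apply le_IZR; rewrite !plus_IZR, !mult_IZR; lra).
assert (E3 : (0 <= (2)*x + (-2)*y + (-18))%Z) by (apply le_IZR; rewrite !plus_IZR, !mult_IZR; lra).
assert (Hx : x = (7) \/ x = (8) \/ x = (9)) by lia.
assert (Hy : y = (-3) \/ y = (-2) \/ y = (-1) \/ y = (0)) by lia.
split_or Hx; split_or Hy; first [exfalso; lia | apply inb_In; reflexivity].
Qed.

Lemma D8_sub x y : D8 (x,y) -> In (x,y) Xl.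
Proof.
unfold D8, D, in_conv_hull. intros (c & Hc & H1 & H2 & H3).
cbn [fold_right map seq length nth fst snd] in *.
assert (A0 := Hc 0%nat ltac:(lia)). assert (A1 := Hc 1%nat ltac:(lia)). assert (A2 := Hc 2%nat ltac:(lia)). assert (A3 := Hc 3%nat ltac:(lia)).
assert (E0 : (0 <= (1)*x + (1)*y + (-5))%Z) by (apply le_IZR; rewrite !plus_IZR, !mult_IZR; lra).
assert (E1 : (0 <= (1)*x + (-1)*y + (-7))%Z) by (apply le_IZR; rewrite !plus_IZR, !mult_IZR; lra).
assert (E2 : (0 <= (-1)*x + (-1)*y + (7))%Z) by (apply le_IZR; rewrite !plus_IZR, !mult_IZR; lra).
assert (E3 : (0 <= (-1)*x + (1)*y + (9))%Z) by (apply le_IZR; rewrite !plus_IZR, !mult_IZR; lra).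
assert (Hx : x = (6) \/ x = (7) \/ x = (8)) by lia.
assert (Hy : y = (-2) \/ y = (-1) \/ y = (0)) by lia.
split_or Hx; split_or Hy; first [exfalso; lia | apply inb_In; reflexivity].
Qed.

Lemma In_X6 p : In p Xl -> X6 p.
Proof.
intros H. unfold X6.
split_or_in H.
- right; left; unfold D1, D, in_conv_hull. exists (fun i => match i with 0%nat => (1)%R | 1%nat => (0)%R | 2%nat => (0)%R | _ => (0)%R end).
  hullsolve.
- right; left; unfold D1, D, in_conv_hull. exists (fun i => match i with 0%nat => (0)%R | 1%nat => (0)%R | 2%nat => (0)%R | _ => (1)%R end).
  hullsolve.
- right; left; unfold D1, D, in_conv_hull. exists (fun i => match i with 0%nat => (1/2)%R | 1%nat => (0)%R | 2%nat => (1/6)%R | _ => (1/3)%R end).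
  hullsolve.
- right; left; unfold D1, D, in_conv_hull. exists (fun i => match i with 0%nat => (2/3)%R | 1%nat => (1/3)%R | 2%nat => (0)%R | _ => (0)%R end).
  hullsolve.
- right; right; right; left; unfold D3, D, in_conv_hull. exists (fun i => match i with 0%nat => (0)%R | 1%nat => (0)%R | 2%nat => (1)%R | _ => (0)%R end).
  hullsolve.
- right; right; right; right; left; unfold D4, D, in_conv_hull. exists (fun i => match i with 0%nat => (1/2)%R | 1%nat => (0)%R | 2%nat => (1/2)%R | _ => (0)%R end).
  hullsolve.
- right; left; unfold D1, D, in_conv_hull. exists (fun i => match i with 0%nat => (0)%R | 1%nat => (0)%R | 2%nat => (1/3)%R | _ => (2/3)%R end).
  hullsolve.
- right; left; unfold D1, D, in_conv_hull. exists (fun i => match i with 0%nat => (1/2)%R | 1%nat => (0)%R | 2%nat => (1/2)%R | _ => (0)%R end).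
  hullsolve.
- right; left; unfold D1, D, in_conv_hull. exists (fun i => match i with 0%nat => (1/3)%R | 1%nat => (2/3)%R | 2%nat => (0)%R | _ => (0)%R end).
  hullsolve.
- right; right; right; left; unfold D3, D, in_conv_hull. exists (fun i => match i with 0%nat => (0)%R | 1%nat => (1)%R | 2%nat => (0)%R | _ => (0)%R end).
  hullsolve.
- right; right; right; left; unfold D3, D, in_conv_hull. exists (fun i => match i with 0%nat => (1/4)%R | 1%nat => (1/4)%R | 2%nat => (1/2)%R | _ => (0)%R end).
  hullsolve.
- right; right; right; left; unfold D3, D, in_conv_hull. exists (fun i => match i with 0%nat => (0)%R | 1%nat => (0)%R | 2%nat => (1/2)%R | _ => (1/2)%R end).
  hullsolve.
- right; left; unfold D1, D, in_conv_hull. exists (fun i => match i with 0%nat => (0)%R | 1%nat => (0)%R | 2%nat => (2/3)%R | _ => (1/3)%R end).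
  hullsolve.
- right; left; unfold D1, D, in_conv_hull. exists (fun i => match i with 0%nat => (1/6)%R | 1%nat => (1/3)%R | 2%nat => (1/2)%R | _ => (0)%R end).
  hullsolve.
- right; left; unfold D1, D, in_conv_hull. exists (fun i => match i with 0%nat => (0)%R | 1%nat => (1)%R | 2%nat => (0)%R | _ => (0)%R end).
  hullsolve.
- right; right; right; left; unfold D3, D, in_conv_hull. exists (fun i => match i with 0%nat => (1/2)%R | 1%nat => (1/2)%R | 2%nat => (0)%R | _ => (0)%R end).
  hullsolve.
- right; right; right; left; unfold D3, D, in_conv_hull. exists (fun i => match i with 0%nat => (1/2)%R | 1%nat => (0)%R | 2%nat => (1/4)%R | _ => (1/4)%R end).
  hullsolve.
- right; right; left; unfold D2, D, in_conv_hull. exists (fun i => match i with 0%nat => (0)%R | 1%nat => (0)%R | 2%nat => (1/2)%R | _ => (1/2)%R end).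
  hullsolve.
- right; right; left; unfold D2, D, in_conv_hull. exists (fun i => match i with 0%nat => (1/2)%R | 1%nat => (0)%R | 2%nat => (1/4)%R | _ => (1/4)%R end).
  hullsolve.
- right; left; unfold D1, D, in_conv_hull. exists (fun i => match i with 0%nat => (0)%R | 1%nat => (0)%R | 2%nat => (1)%R | _ => (0)%R end).
  hullsolve.
- right; right; left; unfold D2, D, in_conv_hull. exists (fun i => match i with 0%nat => (0)%R | 1%nat => (0)%R | 2%nat => (1)%R | _ => (0)%R end).
  hullsolve.
- right; right; left; unfold D2, D, in_conv_hull. exists (fun i => match i with 0%nat => (1/4)%R | 1%nat => (1/4)%R | 2%nat => (1/2)%R | _ => (0)%R end).
  hullsolve.
- right; right; left; unfold D2, D, in_conv_hull. exists (fun i => match i with 0%nat => (1/2)%R | 1%nat => (1/2)%R | 2%nat => (0)%R | _ => (0)%R end).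
  hullsolve.
- right; right; left; unfold D2, D, in_conv_hull. exists (fun i => match i with 0%nat => (0)%R | 1%nat => (1)%R | 2%nat => (0)%R | _ => (0)%R end).
  hullsolve.
- left; reflexivity.
- right; right; right; right; right; left; unfold D5, D, in_conv_hull. exists (fun i => match i with 0%nat => (1)%R | 1%nat => (0)%R | 2%nat => (0)%R | _ => (0)%R end).
  hullsolve.
- right; right; right; right; right; left; unfold D5, D, in_conv_hull. exists (fun i => match i with 0%nat => (0)%R | 1%nat => (0)%R | 2%nat => (0)%R | _ => (1)%R end).
  hullsolve.
- right; right; right; right; right; left; unfold D5, D, in_conv_hull. exists (fun i => match i with 0%nat => (1/2)%R | 1%nat => (0)%R | 2%nat => (1/4)%R | _ => (1/4)%R end).
  hullsolve.
- right; right; right; right; right; left; unfold D5, D, in_conv_hull. exists (fun i => match i with 0%nat => (1/2)%R | 1%nat => (1/2)%R | 2%nat => (0)%R | _ => (0)%R end).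
  hullsolve.
- right; right; right; right; right; right; right; left; unfold D7, D, in_conv_hull. exists (fun i => match i with 0%nat => (0)%R | 1%nat => (0)%R | 2%nat => (0)%R | _ => (1)%R end).
  hullsolve.
- right; right; right; right; right; right; right; right; unfold D8, D, in_conv_hull. exists (fun i => match i with 0%nat => (1/2)%R | 1%nat => (0)%R | 2%nat => (1/2)%R | _ => (0)%R end).
  hullsolve.
- right; right; right; right; right; left; unfold D5, D, in_conv_hull. exists (fun i => match i with 0%nat => (0)%R | 1%nat => (0)%R | 2%nat => (1/2)%R | _ => (1/2)%R end).
  hullsolve.
- right; right; right; right; right; left; unfold D5, D, in_conv_hull. exists (fun i => match i with 0%nat => (1/4)%R | 1%nat => (1/4)%R | 2%nat => (1/2)%R | _ => (0)%R end).
  hullsolve.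
- right; right; right; right; right; left; unfold D5, D, in_conv_hull. exists (fun i => match i with 0%nat => (0)%R | 1%nat => (1)%R | 2%nat => (0)%R | _ => (0)%R end).
  hullsolve.
- right; right; right; right; right; right; right; left; unfold D7, D, in_conv_hull. exists (fun i => match i with 0%nat => (0)%R | 1%nat => (0)%R | 2%nat => (1)%R | _ => (0)%R end).
  hullsolve.
- right; right; right; right; right; right; right; left; unfold D7, D, in_conv_hull. exists (fun i => match i with 0%nat => (1/4)%R | 1%nat => (0)%R | 2%nat => (1/2)%R | _ => (1/4)%R end).
  hullsolve.
- right; right; right; right; right; right; right; left; unfold D7, D, in_conv_hull. exists (fun i => match i with 0%nat => (1/2)%R | 1%nat => (0)%R | 2%nat => (0)%R | _ => (1/2)%R end).
  hullsolve.
- right; right; right; right; right; left; unfold D5, D, in_conv_hull. exists (fun i => match i with 0%nat => (0)%R | 1%nat => (0)%R | 2%nat => (1)%R | _ => (0)%R end).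
  hullsolve.
- right; right; right; right; right; right; left; unfold D6, D, in_conv_hull. exists (fun i => match i with 0%nat => (1/2)%R | 1%nat => (0)%R | 2%nat => (1/2)%R | _ => (0)%R end).
  hullsolve.
- right; right; right; right; right; right; left; unfold D6, D, in_conv_hull. exists (fun i => match i with 0%nat => (0)%R | 1%nat => (1)%R | 2%nat => (0)%R | _ => (0)%R end).
  hullsolve.
- right; right; right; right; right; right; right; left; unfold D7, D, in_conv_hull. exists (fun i => match i with 0%nat => (0)%R | 1%nat => (1)%R | 2%nat => (0)%R | _ => (0)%R end).
  hullsolve.
- right; right; right; right; right; right; right; left; unfold D7, D, in_conv_hull. exists (fun i => match i with 0%nat => (1/2)%R | 1%nat => (1/2)%R | 2%nat => (0)%R | _ => (0)%R end).
  hullsolve.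
- right; right; right; right; right; right; left; unfold D6, D, in_conv_hull. exists (fun i => match i with 0%nat => (0)%R | 1%nat => (0)%R | 2%nat => (0)%R | _ => (1)%R end).
  hullsolve.
- right; right; right; right; right; right; left; unfold D6, D, in_conv_hull. exists (fun i => match i with 0%nat => (0)%R | 1%nat => (0)%R | 2%nat => (1/2)%R | _ => (1/2)%R end).
  hullsolve.
- right; right; right; right; right; right; left; unfold D6, D, in_conv_hull. exists (fun i => match i with 0%nat => (0)%R | 1%nat => (0)%R | 2%nat => (1)%R | _ => (0)%R end).
  hullsolve.
- destruct H.
Qed.

Definition fmaps : list (pt * list (pt*pt)) := [((-3,0), [((-3,0),(2,0)); ((-2,-1),(2,-1)); ((-2,0),(2,0)); ((-2,1),(2,1)); ((-1,-2),(1,-2)); ((-1,-1),(2,-1)); ((-1,0),(1,0)); ((-1,1),(1,1)); ((-1,2),(1,2)); ((0,-2),(1,-2)); ((0,-1),(2,-1)); ((1,-1),(2,-1))]);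
 ((0,-3), [((-2,-1),(-2,0)); ((-1,-2),(-1,1)); ((-1,-1),(-1,0)); ((0,-3),(0,1)); ((0,-2),(0,1)); ((0,-1),(0,1)); ((1,-2),(1,2)); ((1,-1),(1,1)); ((2,-1),(2,1))]);
 ((0,3), [((-2,1),(-2,0)); ((-1,1),(-1,0)); ((-1,2),(-1,1)); ((0,2),(0,1)); ((0,3),(0,1)); ((1,1),(1,0)); ((1,2),(1,1)); ((2,0),(2,-1)); ((2,1),(2,0))]);
 ((8,-3), [((8,-3),(8,-2))]);
 ((8,3), [((6,0),(6,-1)); ((6,1),(6,0)); ((7,1),(7,0)); ((7,2),(7,1)); ((8,2),(8,1)); ((8,3),(8,2))]);
 ((9,-2), [((9,-2),(8,-2))]);
 ((9,-1), [((9,-1),(8,-1))]);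
 ((9,1), [((9,1),(8,1))]);
 ((9,2), [((9,2),(8,2))])].

Lemma X6_In p : X6 p -> In p Xl.
Proof. destruct p as [x y]. unfold X6. intros [H|[H|[H|[H|[H|[H|[H|[H|H]]]]]]]].
- rewrite H. apply inb_In; reflexivity.
- apply D1_sub; auto.
- apply D2_sub; auto.
- apply D3_sub; auto.
- apply D4_sub; auto.
- apply D5_sub; auto.
- apply D6_sub; auto.
- apply D7_sub; auto.
- apply D8_sub; auto.
Qed.

Definition adjb (a b : pt) : bool :=
  negb (pteqb a b) && Z.leb (Z.abs (fst a - fst b)) 1 && Z.leb (Z.abs (snd a - snd b)) 1.
Lemma adjb_iff a b : adjb a b = true <-> c2_adj a b.
Proof. unfold adjb, c2_adj. rewrite !andb_true_iff, negb_true_iff, !Z.leb_le.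
split.
- intros [[H1 H2] H3]. split; [|auto]. intros E. apply pteqb_iff in E. congruence.
- intros [H1 [H2 H3]]. repeat split; auto. destruct (pteqb a b) eqn:E; auto.
  apply pteqb_iff in E; contradiction.
Qed.

Fixpoint lookup (d : list (pt * list pt)) (x : pt) : list pt :=
  match d with [] => Xl | (k, l) :: d' => if pteqb x k then l else lookup d' x end.

Definition okv (d : list (pt*list pt)) (x u : pt) : bool :=
  forallb (fun y => negb (adjb x y) || existsb (fun v => pteqb u v || adjb u v) (lookup d y)) Xl.
Definition refine (d : list (pt * list pt)) : list (pt * list pt) :=
  map (fun x => (x, filter (okv d x) (lookup d x))) Xl.

Lemma lookup_map (g : pt -> list pt) L x : In x L -> lookup (map (fun x => (x, g x)) L) x = g x.
Proof. induction L as [|a L IH]; simpl; [tauto|]. intros [<-|H].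
- rewrite pteqb_refl. auto.
- destruct (pteqb x a) eqn:E; [apply pteqb_iff in E; subst; auto | auto]. Qed.

Definition Inv (f : pt -> pt) d := forall x, In x Xl -> In (f x) (lookup d x).

Lemma refine_sound f d : c2_continuous X6 f -> Inv f d -> Inv f (refine d).
Proof. intros [Hm Hc] HI x Hx. unfold refine. rewrite lookup_map by auto.
apply filter_In. split; [auto|]. unfold okv. apply forallb_forall. intros y Hy.
destruct (adjb x y) eqn:E; [|reflexivity]. simpl. apply adjb_iff in E.
apply existsb_exists. exists (f y). split; [apply HI; auto|].
destruct (Hc x y (In_X6 _ Hx) (In_X6 _ Hy) E) as [Q|Q].
- rewrite Q. rewrite pteqb_refl. reflexivity.
- apply adjb_iff in Q. rewrite Q. apply orb_true_r.
Qed.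

Definition Bl : list pt := [(-3, 0); (0, -3); (0, 3); (8, -3); (8, 3); (9, -2); (9, -1); (9, 1); (9, 2)].
Definition d0 : list (pt * list pt) := map (fun x => (x, if inb x Bl then [x] else Xl)) Xl.
Lemma d0_inv f : c2_continuous X6 f -> (forall a, B' a -> f a = a) -> Inv f d0.
Proof. intros [Hm Hc] HB x Hx. unfold d0. rewrite lookup_map by auto.
destruct (inb x Bl) eqn:E.
- apply inb_iff in E. rewrite HB by exact E. simpl; auto.
- apply X6_In, Hm, In_X6, Hx. Qed.

Fixpoint iter_ref n d := match n with 0%nat => d | S n => iter_ref n (refine d) end.
Lemma iter_sound f n d : c2_continuous X6 f -> Inv f d -> Inv f (iter_ref n d).
Proof. intros Hf. revert d. induction n; simpl; auto. intros d H. apply IHn, refine_sound; auto. Qed.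

Definition NN := 12%nat.
Definition dcheck d := forallb (fun x => match lookup d x with [y] => pteqb y x | _ => false end) Xl.
Lemma dfin_ok : dcheck (iter_ref NN d0) = true.
Proof. vm_compute. reflexivity. Qed.

Lemma B'_X a : B' a -> In a Xl.
Proof. intros H. assert (K : forallb (fun b => inb b Xl) Bl = true) by reflexivity.
rewrite forallb_forall in K. apply inb_iff, K, H. Qed.

Lemma dcheck_spec d : dcheck d = true -> forall x, In x Xl -> lookup d x = [x].
Proof. unfold dcheck. rewrite forallb_forall. intros H x Hx. specialize (H x Hx).
destruct (lookup d x) as [|y [|]]; try discriminate. apply pteqb_iff in H. subst; auto. Qed.

Lemma freezing : freezing_set X6 B'.
Proof. split.
- intros a Ha. apply In_X6, B'_X, Ha.
- intros f Hf HB x Hx. pose proof (iter_sound f NN d0 Hf (d0_inv f Hf HB)) as I.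
  apply X6_In in Hx. specialize (I x Hx).
  pose proof (dcheck_spec _ dfin_ok x Hx) as K.
  unfold Inv in I. rewrite K in I. destruct I as [<-|[]]; auto.
Qed.

Fixpoint applym (m : list (pt*pt)) (p : pt) : pt :=
  match m with [] => p | (k,v)::m' => if pteqb p k then v else applym m' p end.
Definition cont_check (f : pt -> pt) : bool :=
  forallb (fun x => inb (f x) Xl && forallb (fun y => negb (adjb x y) || pteqb (f x) (f y) || adjb (f x) (f y)) Xl) Xl.
Lemma cont_check_ok f : cont_check f = true -> c2_continuous X6 f.
Proof. unfold cont_check. intros H. rewrite forallb_forall in H. split.
- intros x Hx. apply X6_In in Hx. apply H, andb_true_iff in Hx. destruct Hx as [A _].
  apply In_X6, inb_iff, A.
- intros x y Hx Hy Hxy. apply X6_In in Hx. apply X6_In in Hy.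
  apply H, andb_true_iff in Hx. destruct Hx as [_ A].
  rewrite forallb_forall in A. specialize (A y Hy). apply adjb_iff in Hxy. rewrite Hxy in A.
  simpl in A. apply orb_true_iff in A.
  destruct A as [A|A]; [left; apply pteqb_iff; auto | right; apply adjb_iff; auto].
Qed.

Lemma not_freeze a m (A' : pt -> Prop) : B' a -> ~ A' a -> (forall b, A' b -> B' b) ->
  cont_check (applym m) = true ->
  forallb (fun b => pteqb b a || pteqb (applym m b) b) Bl = true ->
  pteqb (applym m a) a = false -> ~ freezing_set X6 A'.
Proof. intros Ha Hna HA Hc Hf Hne [_ Fr].
assert (E : applym m a = a).
{ apply Fr.
  - apply cont_check_ok; auto.
  - intros b Hb. rewrite forallb_forall in Hf. specialize (Hf b (HA b Hb)).
    apply orb_true_iff in Hf.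
    destruct Hf as [Q|Q]; [apply pteqb_iff in Q; subst; contradiction | apply pteqb_iff; auto].
  - apply In_X6, B'_X, Ha. }
rewrite E, pteqb_refl in Hne. discriminate.
Qed.

Fixpoint mapfor (l : list (pt * list (pt*pt))) (a : pt) : list (pt*pt) :=
  match l with [] => [] | (k,m)::r => if pteqb a k then m else mapfor r a end.

Theorem mainTheorem6 : minimal_freezing_set X6 B'.
Proof. split; [exact freezing|]. intros A' HA [a [Ha Hna]].
pose proof Ha as Ha'. unfold B' in Ha'. simpl in Ha'.
repeat (destruct Ha' as [<-|Ha']);
try (match type of Ha with B' ?a => refine (@not_freeze a (mapfor fmaps a) A' Ha Hna HA _ _ _) end; vm_compute; reflexivity).
all: try destruct Ha'.
Qed.
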